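(* Along the boundary curve $x=x_{\rm splg}(h)$, $$\lim_{h\to\infty}\frac{c^*(x_{\rm splg}(h),h)}{x_{\rm splg}(h)}=r,\qquad \lim_{h\to\infty}\pi^*(x_{\rm splg}(h),h)=\frac{(\mu-r)(1-\lambda)^{r_1-1}}{r\beta\sigma^2}.$$
   Context: Parameters $r>0$, $\mu>r$, $\sigma>0$, $\beta>0$, $\lambda\in(0,1)$, $\kappa=(\mu-r)/\sigma$, $r_{1,2}=\frac12(1\pm\sqrt{1+8r/\kappa^2})$. Define $C_6(h):=\frac{(1-\lambda)^{r_1-r_2}}{(r_1-r_2)\beta r}\Big[\frac{1}{1-r_2}e^{(\lambda-1)(1-r_2)\beta h}-\frac{\lambda}{\lambda(1-r_2)-(r_1-r_2)}e^{[\lambda(1-r_2)-(r_1-r_2)]\beta h}\Big]$ and $C_5(h):=\frac{(1-r_2)\kappa^2}{2(r_1-r_2)\beta r^2}[e^{(\lambda-1)(1-r_1)\beta h}-e^{\lambda(1-r_1)\beta h}]$, and $x_{\rm splg}(h):=-r_1C_5(h)(1-\lambda)^{r_1-1}e^{(\lambda-1)(r_1-1)\beta h}-r_2C_6(h)(1-\lambda)^{r_2-1}e^{(\lambda-1)(r_2-1)\beta h}+\frac hr$. On this curve the optimal feedback consumption is $c^*(x_{\rm splg}(h),h)=h$ and the optimal feedback portfolio is $\pi^*(x_{\rm splg}(h),h)=\frac{\mu-r}{\sigma^2}\big[\frac{2r}{\kappa^2}C_5(h)y^{r_1-1}+\frac{2r}{\kappa^2}C_6(h)y^{r_2-1}\big]$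 with $y=(1-\lambda)e^{(\lambda-1)\beta h}$ (these are the optimal controls of the problem $\sup\mathbb E[\int_0^\infty e^{-rt}(-\frac1\beta e^{-\beta(c_t-\lambda H_t)})dt]$ with $H_t$ the running maximum of consumption, wealth $dX=rXdt+\pi(\mu-r)dt+\pi\sigma dW-cdt$). *)

(* Defs.v *)
From Stdlib Require Import Reals.
From Coquelicot Require Import Coquelicot.
Open Scope R_scope.

Definition kappa (r mu sigma : R) : R := (mu - r) / sigma.

Definition r1 (r mu sigma : R) : R :=
  / 2 * (1 + sqrt (1 + 8 * r / (kappa r mu sigma) ^ 2)).
Definition r2 (r mu sigma : R) : R :=
  / 2 * (1 - sqrt (1 + 8 * r / (kappa r mu sigma) ^ 2)).

Definition C6 (r mu sigma beta lambda h : R) : R :=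
  let a := r1 r mu sigma in let b := r2 r mu sigma in
  Rpower (1 - lambda) (a - b) / ((a - b) * beta * r) *
  ( / (1 - b) * exp ((lambda - 1) * (1 - b) * beta * h)
    - lambda / (lambda * (1 - b) - (a - b))
      * exp ((lambda * (1 - b) - (a - b)) * beta * h)).

Definition C5 (r mu sigma beta lambda h : R) : R :=
  let a := r1 r mu sigma in let b := r2 r mu sigma in
  let k := kappa r mu sigma in
  (1 - b) * k ^ 2 / (2 * (a - b) * beta * r ^ 2) *
  (exp ((lambda - 1) * (1 - a) * beta * h) - exp (lambda * (1 - a) * beta * h)).

Definition x_splg (r mu sigma beta lambda h : R) : R :=
  let a := r1 r mu sigma in let b := r2 r mu sigma in
  - a * C5 r mu sigma beta lambda h * Rpower (1 - lambda) (a - 1)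
      * exp ((lambda - 1) * (a - 1) * beta * h)
  - b * C6 r mu sigma beta lambda h * Rpower (1 - lambda) (b - 1)
      * exp ((lambda - 1) * (b - 1) * beta * h)
  + h / r.

Definition y_splg (beta lambda h : R) : R :=
  (1 - lambda) * exp ((lambda - 1) * beta * h).

(* optimal consumption on the curve: c*(x_splg(h), h) = h *)
Definition c_splg (h : R) : R := h.

Definition pi_splg (r mu sigma beta lambda h : R) : R :=
  let a := r1 r mu sigma in let b := r2 r mu sigma in
  let k := kappa r mu sigma in
  let y := y_splg beta lambda h in
  (mu - r) / sigma ^ 2 *
  (2 * r / k ^ 2 * C5 r mu sigma beta lambda h * Rpower y (a - 1)
   + 2 * r / k ^ 2 * C6 r mu sigma beta lambda h * Rpower y (b - 1)).

(* Main.v *)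
Require Import Defs.
From Stdlib Require Import Reals Lra.
From Coquelicot Require Import Coquelicot.
Open Scope R_scope.

Lemma lim_expneg c : c < 0 -> is_lim (fun h => exp (c*h)) p_infty 0.
Proof.
  intro Hc.
  apply (is_lim_comp exp (fun h => c*h) p_infty 0 m_infty).
  - exact is_lim_exp_m.
  - assert (H := is_lim_mult (fun _ => c) (fun y => y) p_infty c p_infty
             (is_lim_const c p_infty) (is_lim_id p_infty)).
    assert (E : Rbar_mult (Finite c) p_infty = m_infty).
    { simpl. destruct (Rle_dec 0 c) as [h|h]; [exfalso; lra | reflexivity]. }
    rewrite E in H. apply H. simpl. lra.
  - exists 0. intros; discriminate.
Qed.

Lemma lim_lin A B c : c < 0 -> is_lim (fun h => A + B*exp(c*h)) p_infty A.
Proof.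
  intro Hc.
  assert (H := is_lim_plus (fun _ => A) (fun h => B*exp(c*h)) p_infty A (B*0) (A + B*0)
    (is_lim_const A p_infty)
    (is_lim_mult (fun _ => B) (fun h => exp (c*h)) p_infty B 0 (is_lim_const B p_infty) (lim_expneg c Hc) I)).
  replace (Finite A) with (Finite (A + B*0)) by (f_equal; ring).
  apply H. simpl. reflexivity.
Qed.

Lemma lim_ratio r A B c : 0 < r -> c < 0 ->
  is_lim (fun h => h / (- A - B*exp(c*h) + h / r)) p_infty r.
Proof.
  intros Hr Hc.
  apply is_lim_ext_loc with (fun h => / ((-A - B*exp(c*h)) * / h + / r)).
  { exists 0. intros y Hy. unfold Rdiv. replace ((-A - B*exp(c*y)) * / y + / r) with ((-A - B*exp(c*y) + y * / r) * / y).
    2:{ field. lra. }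
    rewrite Rinv_mult, Rinv_inv. ring. }
  replace (Finite r) with (Rbar_inv (Finite (/ r))).
  2:{ simpl. f_equal. apply Rinv_inv. }
  apply is_lim_inv.
  2:{ intro E. injection E. apply Rinv_neq_0_compat. lra. }
  replace (Finite (/ r)) with (Finite ((-A - B*0) * 0 + / r)) by (f_equal; ring).
  apply is_lim_plus with (lf := Finite ((-A - B*0) * 0)) (lg := Finite (/ r)).
  2: apply is_lim_const.
  2: simpl; reflexivity.
  apply (is_lim_mult (fun h => -A - B*exp(c*h)) (fun h => / h) p_infty (-A - B*0) 0).
  - apply is_lim_minus with (lf := Finite (-A)) (lg := Finite (B*0)).
    apply is_lim_const.
    apply (is_lim_mult (fun _ => B) (fun h => exp (c*h)) p_infty B 0 (is_lim_const B p_infty) (lim_expneg c Hc) I).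
    simpl. reflexivity.
  - replace (Finite 0) with (Rbar_inv p_infty) by reflexivity.
    apply is_lim_inv. apply is_lim_id. discriminate.
  - exact I.
Qed.
Lemma alg a b k r be si m P : a+b=1 -> a*b*k^2 = -2*r -> a-b<>0 -> 1-b<>0 -> k<>0 -> r<>0 -> be<>0 -> si<>0 ->
 m/si^2*(2*r/k^2*P*((1-b)*k^2/(2*(a-b)*be*r^2)) + 2*r/k^2*(P/((a-b)*be*r))*/(1-b)) = m*P/(r*be*si^2).
Proof.
  intros H1 H2 H3 H4 H5 H6 H7 H8.
  assert (Hb : b = 1 - a) by lra. subst b.
  assert (Hr : r = - a*(1-a)*k^2/2) by lra.
  assert (Ha : a <> 0) by (intro E; apply H6; rewrite Hr, E; field).
  assert (Ha1 : 1 - a <> 0) by (intro E; apply H6; rewrite Hr, E; field).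
  assert (Ha2 : 2*a-1 <> 0) by lra.
  field_simplify; try (repeat split; assumption).
  rewrite Hr. field. repeat split; try assumption.
  replace (si ^ 2 * (- a * (1 - a) * k ^ 2) * k ^ 2 * a ^ 2 * be * 2 -
  si ^ 2 * (- a * (1 - a) * k ^ 2) * k ^ 2 * a * be) with (-(si^2*a*(1-a)*k^2*k^2*a*be*(2*a-1))) by ring.
  apply Ropp_neq_0_compat.
  repeat apply Rmult_integral_contrapositive_currified; first [assumption | apply pow_nonzero; assumption | lra].
Qed.

Theorem corollary3p2 (r mu sigma beta lambda : R) :
  0 < r -> r < mu -> 0 < sigma -> 0 < beta -> 0 < lambda < 1 ->
  is_lim (fun h => c_splg h / x_splg r mu sigma beta lambda h) p_infty (Finite r)
  /\
  is_lim (fun h => pi_splg r mu sigma beta lambda h) p_infty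
    (Finite ((mu - r) * Rpower (1 - lambda) (r1 r mu sigma - 1)
             / (r * beta * sigma ^ 2))).
Proof.
  intros Hr Hmu Hs Hb [Hl0 Hl1].
  set (a := r1 r mu sigma). set (b := r2 r mu sigma). set (k := kappa r mu sigma).
  assert (Hk : 0 < k) by (unfold k, kappa; apply Rdiv_lt_0_compat; lra).
  set (s := 1 + 8 * r / k ^ 2).
  assert (Hs1 : 1 < s) by (unfold s; assert (0 < 8 * r / k^2) by (apply Rdiv_lt_0_compat; [lra| apply pow_lt; lra]); lra).
  assert (Hsq : 1 < sqrt s) by (rewrite <- sqrt_1; apply sqrt_lt_1_alt; lra).
  assert (Ea : a = / 2 * (1 + sqrt s)) by reflexivity.
  assert (Eb : b = / 2 * (1 - sqrt s)) by reflexivity.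
  assert (Hsqs : sqrt s * sqrt s = s) by (apply sqrt_sqrt; lra).
  assert (Hab1 : a + b = 1) by (rewrite Ea, Eb; field).
  assert (Habk : a * b * k^2 = -2 * r).
  { rewrite Ea, Eb. replace (/ 2 * (1 + sqrt s) * (/ 2 * (1 - sqrt s))) with (/4 * (1 - sqrt s * sqrt s)) by field.
    rewrite Hsqs. unfold s. field. lra. }
  assert (Hamb : a - b = sqrt s) by (rewrite Ea, Eb; field).
  assert (Ha1 : 1 < a) by (rewrite Ea; lra).
  assert (H1b : 0 < 1 - b) by (rewrite Eb; lra).
  set (P := Rpower (1 - lambda) (a - 1)).
  set (Q := Rpower (1 - lambda) (b - 1)).
  set (R0 := Rpower (1 - lambda) (a - b)).
  assert (HQR : Q * R0 = P).
  { unfold Q, R0, P. rewrite <- Rpower_plus. f_equal. ring. }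
  set (K5 := (1 - b) * k ^ 2 / (2 * (a - b) * beta * r ^ 2)).
  set (K6 := R0 / ((a - b) * beta * r)).
  set (M := lambda / (lambda * (1 - b) - (a - b))).
  set (c := (1 - a) * beta).
  assert (Hc : c < 0) by (unfold c; nra).
  assert (L1 : forall h, C5 r mu sigma beta lambda h * exp ((lambda - 1) * (a - 1) * beta * h)
                         = K5 * (1 - exp (c * h))).
  { intro h. unfold C5. fold a b k. fold K5.
    assert (E1 : exp ((lambda - 1) * (1 - a) * beta * h) * exp ((lambda - 1) * (a - 1) * beta * h) = 1).
    { rewrite <- exp_plus. replace ((lambda - 1) * (1 - a) * beta * h + (lambda - 1) * (a - 1) * beta * h) with 0 by ring. apply exp_0. }
    assert (E2 : exp (lambda * (1 - a) * beta * h) * exp ((lambda - 1) * (a - 1) * beta * h) = exp (c * h)).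
    { rewrite <- exp_plus. f_equal. unfold c. ring. }
    rewrite Rmult_assoc, Rmult_minus_distr_r, E1, E2. reflexivity. }
  assert (L2 : forall h, C6 r mu sigma beta lambda h * exp ((lambda - 1) * (b - 1) * beta * h)
                         = K6 * (/ (1 - b) - M * exp (c * h))).
  { intro h. unfold C6. fold a b. fold R0 K6 M.
    assert (E1 : exp ((lambda - 1) * (1 - b) * beta * h) * exp ((lambda - 1) * (b - 1) * beta * h) = 1).
    { rewrite <- exp_plus. replace ((lambda - 1) * (1 - b) * beta * h + (lambda - 1) * (b - 1) * beta * h) with 0 by ring. apply exp_0. }
    assert (E2 : exp ((lambda * (1 - b) - (a - b)) * beta * h) * exp ((lambda - 1) * (b - 1) * beta * h) = exp (c * h)).
    { rewrite <- exp_plus. f_equal. unfold c. ring. }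
    transitivity (K6 * (/ (1 - b) * (exp ((lambda - 1) * (1 - b) * beta * h) * exp ((lambda - 1) * (b - 1) * beta * h))
       - M * (exp ((lambda * (1 - b) - (a - b)) * beta * h) * exp ((lambda - 1) * (b - 1) * beta * h)))).
    { ring. }
    rewrite E1, E2. ring. }
  split.
  - set (A := a * P * K5 + b * Q * K6 / (1 - b)).
    set (B := - (a * P * K5 + b * Q * K6 * M)).
    apply is_lim_ext with (fun h => h / (- A - B * exp (c * h) + h / r)).
    2: apply lim_ratio; assumption.
    intro h. unfold c_splg. f_equal.
    unfold x_splg. fold a b P Q.
    transitivity (- a * P * (C5 r mu sigma beta lambda h * exp ((lambda - 1) * (a - 1) * beta * h))
                  - b * Q * (C6 r mu sigma beta lambda h * exp ((lambda - 1) * (b - 1) * beta * h)) + h / r).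
    2: ring.
    rewrite L1, L2. unfold A, B. field. lra.
  - assert (LY : forall h p, Rpower (y_splg beta lambda h) p = Rpower (1 - lambda) p * exp ((lambda - 1) * p * beta * h)).
    { intros h p. unfold Rpower, y_splg. rewrite ln_mult, ln_exp by (try apply exp_pos; lra).
      rewrite <- exp_plus. f_equal. ring. }
    set (m := mu - r).
    set (D := m / sigma ^ 2 * (2 * r / k ^ 2 * P * K5 + 2 * r / k ^ 2 * (Q * K6) * / (1 - b))).
    set (F := m / sigma ^ 2 * (- (2 * r / k ^ 2 * P * K5) - 2 * r / k ^ 2 * (Q * K6) * M)).
    apply is_lim_ext with (fun h => D + F * exp (c * h)).
    + intro h. unfold pi_splg. fold a b k m. rewrite !LY. fold P Q.
      replace ((lambda - 1) * (b - 1) * beta * h) with ((lambda - 1) * (b - 1) * beta * h) by reflexivity.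
      transitivity (m / sigma ^ 2 * (2 * r / k ^ 2 * P * (C5 r mu sigma beta lambda h * exp ((lambda - 1) * (a - 1) * beta * h))
          + 2 * r / k ^ 2 * Q * (C6 r mu sigma beta lambda h * exp ((lambda - 1) * (b - 1) * beta * h)))).
      2: ring.
      rewrite L1, L2. unfold D, F. field. lra.
    + replace (Finite (m * P / (r * beta * sigma ^ 2))) with (Finite D).
      * apply lim_lin; assumption.
      * f_equal. unfold D. unfold K6. replace (Q * (R0 / ((a - b) * beta * r))) with (P / ((a - b) * beta * r)).
        2:{ rewrite <- HQR. field. repeat split; lra. }
        unfold K5. apply alg; try assumption; lra.
Qed.
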